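(* Let $X$ be the Markov chain on $\mathbf{Z}^+=\{0,1,2,\dots\}$ with $X_0=0$ and transition probabilities defined as follows: for $n\ge0$ and $2^n-1\le k\le 2^{n+1}-2$, $p_{k,k}=1/2$, $p_{k,2^{n+1}}=\dfrac{1}{(2^{n+1}-k)\ln(n+e^2)}$, $p_{k,k+1}=1/2-p_{k,2^{n+1}}$. Then the jumps $\xi(k)$ are uniformly integrable and converge weakly as $k\to\infty$ to the Bernoulli distribution with $\mathbf{P}\{\xi=0\}=\mathbf{P}\{\xi=1\}=1/2$ (so $1/\mathbf{E}\xi=2$), but the renewal measure $U\{k\}=\sum_{m\ge0}\mathbf{P}\{X_m=k\}$ does not converge to $2$ as $k\to\infty$.
   Context: $\xi(k)$ denotes a random variable with $\mathbf{P}\{k+\xi(k)=j\}=p_{k,j}$. Note $p_{k,2^{n+1}}\le1/2$, so the transition probabilities are well defined. *)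

(* Defs.v *)
From Stdlib Require Import Reals Lra Arith.
Open Scope R_scope.

(* Block index: the unique n with 2^n - 1 <= k <= 2^(n+1) - 2, i.e. log2 (k+1). *)
Definition blk (k : nat) : nat := Nat.log2 (S k).

Definition qjump (k : nat) : R :=
  / ((INR (2 ^ S (blk k)) - INR k) * ln (INR (blk k) + exp 2)).

Definition p (k j : nat) : R :=
  if Nat.eq_dec j k then 1/2
  else if Nat.eq_dec j (2 ^ S (blk k)) then qjump k
  else if Nat.eq_dec j (S k) then 1/2 - qjump k
  else 0.

(* distX m j = P{X_m = j} for the chain started at X_0 = 0.
   Chapman-Kolmogorov; the sum over i is restricted to i <= j since
   p i j = 0 whenever i > j (the chain never moves down). *)
Fixpoint distX (m j : nat) : R :=
  match m with
  | O => if Nat.eq_dec j 0 then 1 else 0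
  | S m' => sum_f_R0 (fun i => distX m' i * p i j) j
  end.

(* E f(xi(k)) = l, where P{k + xi(k) = j} = p_{k,j} *)
Definition jump_expect (k : nat) (f : R -> R) (l : R) : Prop :=
  infinite_sum (fun j => p k j * f (INR j - INR k)) l.

Definition jumps_weak_cv_bernoulli : Prop :=
  forall f : R -> R, continuity f -> (exists B, forall x, Rabs (f x) <= B) ->
    forall L : nat -> R, (forall k, jump_expect k f (L k)) ->
      Un_cv L (f 0 / 2 + f 1 / 2).

(* uniform integrability: sup_k E[|xi(k)| ; |xi(k)| > M] -> 0 as M -> oo *)
Definition tail_part (M : R) (x : R) : R :=
  if Rlt_dec M (Rabs x) then Rabs x else 0.

Definition jumps_unif_integrable : Prop :=
  forall eps, eps > 0 -> exists M0 : R, forall M, M >= M0 ->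
    forall k l, jump_expect k (tail_part M) l -> l < eps.

Definition renewal_measure_is (U : nat -> R) : Prop :=
  forall k, infinite_sum (fun m => distX m k) (U k).

(* Main.v *)
Require Import Defs.
From Stdlib Require Import Reals Lra Lia.
Open Scope R_scope.

Definition LL (n : nat) : R := ln (INR n + exp 2).

Lemma ln_le' x y : 0 < x -> x <= y -> ln x <= ln y.
Proof. intros Hx Hxy. destruct (Rle_lt_or_eq_dec _ _ Hxy) as [H|H].
  - left; apply ln_increasing; auto.
  - subst; lra. Qed.

Lemma exp2_pos : 0 < exp 2. Proof. apply exp_pos. Qed.

Lemma LL_ge2 n : 2 <= LL n.
Proof. unfold LL. rewrite <- (ln_exp 2) at 1. apply ln_le'. apply exp_pos.
  pose proof (pos_INR n). lra. Qed.

Lemma exp2_le9 : exp 2 <= 9.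
Proof. replace 2 with (1+1) by lra. rewrite exp_plus. pose proof exp_le_3.
  pose proof (exp_pos 1). nra. Qed.

Lemma LL_sq n : (9 <= n)%nat -> (LL n)^2 < 8 * INR n.
Proof. intros Hn. pose proof (LL_ge2 n) as H2. unfold LL in *.
  set (y := INR n + exp 2) in *. set (L := ln y) in *.
  assert (Hy : 0 < y) by (unfold y; pose proof (pos_INR n); pose proof exp2_pos; lra).
  assert (E : y = exp (L/2) * exp (L/2)).
  { rewrite <- exp_plus. replace (L/2+L/2) with L by lra. unfold L; rewrite exp_ln; auto. }
  assert (H1 : 1 + L/2 < exp (L/2)) by (apply exp_ineq1; lra).
  assert (H9 : 9 <= INR n) by (replace 9 with (INR 9) by (simpl; lra); apply le_INR; lia).
  pose proof exp2_le9. unfold y in E. nra. Qed.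

Lemma LL_large eps : eps > 0 -> exists N, forall n, (N <= n)%nat -> / LL n < eps.
Proof. intros He. destruct (INR_unbounded (exp (/eps))) as [N HN]. exists N. intros n Hn.
  assert (HLn : / eps < LL n).
  { unfold LL. rewrite <- (ln_exp (/eps)). apply ln_increasing. apply exp_pos.
    apply le_INR in Hn. pose proof exp2_pos. lra. }
  pose proof (LL_ge2 n).
  rewrite <- (Rinv_inv eps). apply Rinv_lt_contravar.
  apply Rmult_lt_0_compat. apply Rinv_0_lt_compat; lra. lra. exact HLn. Qed.

Lemma blk_spec k : (2 ^ blk k <= S k < 2 ^ S (blk k))%nat.
Proof. unfold blk. apply Nat.log2_spec. lia. Qed.

Lemma blk_eq n d : (S d < 2 ^ n)%nat -> blk (2 ^ n + d) = n.
Proof. intros H. unfold blk. apply Nat.log2_unique. lia.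
  rewrite Nat.pow_succ_r'. lia. Qed.

Lemma D_ge2 k : 2 <= INR (2 ^ S (blk k)) - INR k.
Proof. pose proof (blk_spec k). assert (H0 : (k + 2 <= 2 ^ S (blk k))%nat) by lia.
  apply le_INR in H0. rewrite plus_INR in H0. replace (INR 2) with 2 in H0 by (simpl; lra). lra. Qed.

Lemma qjump_eq k : qjump k = / ((INR (2 ^ S (blk k)) - INR k) * LL (blk k)).
Proof. reflexivity. Qed.

Lemma qjump_bounds k : 0 <= qjump k <= 1/4.
Proof. rewrite qjump_eq. pose proof (D_ge2 k). pose proof (LL_ge2 (blk k)).
  split. left; apply Rinv_0_lt_compat; nra.
  replace (1/4) with (/ (2*2)) by field. apply Rinv_le_contravar. lra. nra. Qed.

Lemma p_bounds k j : 0 <= p k j <= 1.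
Proof. pose proof (qjump_bounds k). unfold p.
  destruct (Nat.eq_dec j k); [lra|]. destruct (Nat.eq_dec j _); [lra|].
  destruct (Nat.eq_dec j _); lra. Qed.

Lemma pkk k : p k k = 1/2.
Proof. unfold p. destruct (Nat.eq_dec k k); [auto|congruence]. Qed.

Lemma p_succ k : p k (S k) = 1/2 - qjump k.
Proof. unfold p. pose proof (blk_spec k).
  destruct (Nat.eq_dec (S k) k); [lia|]. destruct (Nat.eq_dec (S k) _); [lia|].
  destruct (Nat.eq_dec (S k) (S k)); [auto|congruence]. Qed.

Lemma sum_ind (t : nat) c N : (t <= N)%nat ->
  sum_f_R0 (fun j => if Nat.eq_dec j t then c else 0) N = c.
Proof. induction N; intros H.
  - replace t with 0%nat by lia. reflexivity.
  - rewrite tech5. destruct (Nat.eq_dec (S N) t).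
    + rewrite sum_eq_R0. lra. intros m Hm. destruct (Nat.eq_dec m t); [lia|auto].
    + rewrite IHN by lia. lra. Qed.

Lemma inf_sum_ev s c N0 : (forall n, (n >= N0)%nat -> sum_f_R0 s n = c) -> infinite_sum s c.
Proof. intros H eps He. exists N0. intros n Hn. rewrite H by auto. rewrite Rdist_eq. lra. Qed.

Lemma jump_expect_val k f l : jump_expect k f l ->
  l = f 0 / 2 + qjump k * f (INR (2 ^ S (blk k)) - INR k) + (1/2 - qjump k) * f 1.
Proof. intros H. unfold jump_expect in H. pose proof (blk_spec k) as Hb.
  set (T := (2 ^ S (blk k))%nat) in *.
  eapply uniqueness_sum. exact H.
  apply inf_sum_ev with T. intros n Hn.
  transitivity (sum_f_R0 (fun j => (if Nat.eq_dec j k then f 0 / 2 else 0)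
     + (if Nat.eq_dec j T then qjump k * f (INR T - INR k) else 0)
     + (if Nat.eq_dec j (S k) then (1/2 - qjump k) * f 1 else 0)) n).
  - apply sum_eq. intros j _. unfold p. fold T.
    destruct (Nat.eq_dec j k) as [->|].
    + destruct (Nat.eq_dec k T); [lia|]. destruct (Nat.eq_dec k (S k)); [lia|].
      rewrite Rminus_diag. lra.
    + destruct (Nat.eq_dec j T) as [->|].
      * destruct (Nat.eq_dec T (S k)); [lia|]. ring.
      * destruct (Nat.eq_dec j (S k)) as [->|]. 
        -- rewrite S_INR. replace (INR k + 1 - INR k) with 1 by ring. ring.
        -- ring.
  - rewrite !plus_sum. rewrite !sum_ind by lia. reflexivity. Qed.

Lemma tail_part_small M x : 0 <= M -> Rabs x <= M -> tail_part M x = 0.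
Proof. intros. unfold tail_part. destruct (Rlt_dec M (Rabs x)); [lra|auto]. Qed.

Lemma part1 : jumps_unif_integrable.
Proof. intros eps He. destruct (LL_large eps He) as [N HN].
  exists (INR (2 ^ N) + 1). intros M HM k l Hl.
  apply jump_expect_val in Hl. subst l.
  assert (H2N : 1 <= INR (2 ^ N)).
  { replace 1 with (INR 1) by reflexivity. apply le_INR. pose proof (Nat.pow_le_mono_r 2 0 N). simpl in H. lia. }
  rewrite (tail_part_small M 0) by (try rewrite Rabs_R0; lra).
  rewrite (tail_part_small M 1) by (try rewrite Rabs_R1; lra).
  pose proof (D_ge2 k) as HD. pose proof (blk_spec k) as Hb.
  unfold tail_part at 1. destruct (Rlt_dec _ _) as [Hlt|]; [|lra].
  rewrite Rabs_right in Hlt by lra. rewrite Rabs_right by lra.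
  rewrite qjump_eq.
  replace (/ ((INR (2 ^ S (blk k)) - INR k) * LL (blk k)) * (INR (2 ^ S (blk k)) - INR k))
    with (/ LL (blk k)) by (field; pose proof (LL_ge2 (blk k)); lra).
  assert (HNb : (N < blk k)%nat).
  { apply (Nat.pow_lt_mono_r_iff 2); [lia|]. apply INR_lt.
    assert (Hk : (2 ^ blk k <= S k)%nat) by lia. apply le_INR in Hk. rewrite S_INR in Hk.
    rewrite Nat.pow_succ_r' in Hlt. rewrite mult_INR in Hlt.
    replace (INR 2) with 2 in Hlt by (simpl; lra). lra. }
  pose proof (HN (blk k) ltac:(lia)). lra. Qed.

Lemma part2 : jumps_weak_cv_bernoulli.
Proof. intros f _ [B HB] L HL eps He.
  assert (HB0 : 0 <= B) by (pose proof (HB 0); pose proof (Rabs_pos (f 0)); lra).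
  assert (He' : eps / (2*B+2) > 0) by (apply Rdiv_lt_0_compat; lra).
  destruct (LL_large _ He') as [N HN]. exists (2 ^ N)%nat. intros k Hk.
  rewrite (jump_expect_val k f (L k) (HL k)).
  assert (HNb : (N <= blk k)%nat).
  { rewrite <- (Nat.log2_pow2 N) by lia. unfold blk. apply Nat.log2_le_mono. lia. }
  pose proof (HN _ HNb) as Hq.
  pose proof (qjump_bounds k) as Hqb.
  assert (Hq2 : qjump k <= / LL (blk k)).
  { rewrite qjump_eq. pose proof (D_ge2 k). pose proof (LL_ge2 (blk k)).
    apply Rinv_le_contravar. lra. nra. }
  set (D := f (INR (2 ^ S (blk k)) - INR k)) in *.
  pose proof (HB (INR (2 ^ S (blk k)) - INR k)). fold D in H. pose proof (HB 1).
  unfold Rdist.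
  replace (f 0 / 2 + qjump k * D + (1 / 2 - qjump k) * f 1 - (f 0 / 2 + f 1 / 2))
    with (qjump k * (D - f 1)) by field.
  rewrite Rabs_mult. rewrite Rabs_right by lra.
  assert (Rabs (D - f 1) <= 2 * B).
  { unfold Rminus. eapply Rle_trans. apply Rabs_triang. rewrite Rabs_Ropp. lra. }
  assert (eps / (2*B+2) * (2*B+2) = eps) by (field; lra).
  pose proof (Rabs_pos (D - f 1)).
  nra. Qed.

Lemma distX_nonneg m j : 0 <= distX m j.
Proof. revert j; induction m; intros j; simpl.
  - destruct (Nat.eq_dec j 0); lra.
  - apply cond_pos_sum. intros i. apply Rmult_le_pos; auto. apply p_bounds. Qed.

Definition SM (M j : nat) : R := sum_f_R0 (fun m => distX m j) M.

Lemma decomp_S (a : nat -> R) M : sum_f_R0 a (S M) = a 0%nat + sum_f_R0 (fun m => a (S m)) M.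
Proof. induction M. simpl. ring. rewrite tech5, IHM, tech5. ring. Qed.

Lemma sum_swap (a : nat -> nat -> R) M J :
  sum_f_R0 (fun m => sum_f_R0 (fun i => a m i) J) M = sum_f_R0 (fun i => sum_f_R0 (fun m => a m i) M) J.
Proof. induction M.
  - reflexivity.
  - rewrite tech5, IHM. rewrite <- plus_sum. apply sum_eq. intros i _. rewrite tech5. reflexivity. Qed.

Lemma SM_succ M j : SM (S M) j = distX 0 j + sum_f_R0 (fun i => SM M i * p i j) j.
Proof. unfold SM. rewrite decomp_S. f_equal.
  change (sum_f_R0 (fun m => sum_f_R0 (fun i => distX m i * p i j) j) M =
          sum_f_R0 (fun i => sum_f_R0 (fun m => distX m i) M * p i j) j).
  rewrite sum_swap. apply sum_eq. intros i _. rewrite Rmult_comm, scal_sum. reflexivity. Qed.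

Lemma SM_nonneg M j : 0 <= SM M j.
Proof. apply cond_pos_sum. intros; apply distX_nonneg. Qed.

Lemma SM_mono M j : SM M j <= SM (S M) j.
Proof. unfold SM. rewrite tech5. pose proof (distX_nonneg (S M) j). lra. Qed.

Lemma distX0_le1 j : distX 0 j <= 1.
Proof. simpl. destruct (Nat.eq_dec j 0); lra. Qed.

Lemma SM_bounded j : exists C, forall i, (i <= j)%nat -> forall M, SM M i <= C.
Proof. induction j.
  - exists 2. intros i Hi M. replace i with 0%nat by lia.
    pose proof (SM_mono M 0). rewrite SM_succ in H. simpl sum_f_R0 in H.
    rewrite pkk in H. pose proof (distX0_le1 0). lra.
  - destruct IHj as [C HC].
    assert (HC0 : 0 <= C) by (pose proof (HC 0%nat ltac:(lia) 0%nat); pose proof (SM_nonneg 0 0); lra).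
    exists (Rmax C (2 + 2 * C * INR (S j))). intros i Hi M.
    destruct (Nat.eq_dec i (S j)) as [->|].
    + pose proof (SM_mono M (S j)). rewrite SM_succ, tech5, pkk in H.
      assert (sum_f_R0 (fun i => SM M i * p i (S j)) j <= sum_f_R0 (fun _ => C) j).
      { apply sum_Rle. intros n Hn. pose proof (p_bounds n (S j)). pose proof (SM_nonneg M n).
        pose proof (HC n Hn M). nra. }
      rewrite sum_cte in H0. pose proof (distX0_le1 (S j)).
      eapply Rle_trans; [|apply Rmax_r]. lra.
    + eapply Rle_trans; [|apply Rmax_l]. apply HC. lia. Qed.

Lemma part3 : forall k, exists u, infinite_sum (fun m => distX m k) u.
Proof. intros k. destruct (SM_bounded k) as [C HC].
  destruct (growing_cv (fun M => SM M k)) as [l Hl].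
  - intros M. apply SM_mono.
  - exists C. intros x [i ->]. apply HC. lia.
  - exists l. exact Hl. Qed.

Lemma p_zero_before n d i : (S d < 2 ^ n)%nat -> (i < 2 ^ n + d)%nat -> p i (2 ^ n + S d) = 0.
Proof. intros H1 H2. pose proof (blk_spec i) as Hb. unfold p.
  destruct (Nat.eq_dec (2 ^ n + S d) i); [lia|].
  assert (Hbl : (blk i < S n)%nat).
  { apply (Nat.pow_lt_mono_r_iff 2); [lia|]. rewrite Nat.pow_succ_r'. lia. }
  destruct (Nat.eq_dec (2 ^ n + S d) (2 ^ S (blk i))) as [e|].
  { exfalso. assert (Hc: blk i = n \/ (S (blk i) <= n)%nat) by lia. destruct Hc as [e'|Hc].
    - rewrite e' in e. rewrite Nat.pow_succ_r' in e. lia.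
    - assert (2 ^ S (blk i) <= 2 ^ n)%nat by (apply Nat.pow_le_mono_r; lia). lia. }
  destruct (Nat.eq_dec (2 ^ n + S d) (S i)); [lia|]. reflexivity. Qed.

Lemma distX_step_gen k m : (forall i, (i < S k)%nat -> p i (S (S k)) = 0) ->
  distX (S m) (S (S k)) = distX m (S k) * p (S k) (S (S k)) + distX m (S (S k)) * (1/2).
Proof. intros H.
  change (distX (S m) (S (S k))) with (sum_f_R0 (fun i => distX m i * p i (S (S k))) (S (S k))).
  rewrite tech5, tech5, sum_eq_R0. rewrite pkk. ring.
  intros i Hi. rewrite H by lia. ring. Qed.

Lemma cv_const c : Un_cv (fun _ => c) c.
Proof. intros eps He. exists 0%nat. intros. rewrite Rdist_eq. lra. Qed.

Lemma U_rec j k Uj Uk c : infinite_sum (fun m => distX m j) Uj ->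
  infinite_sum (fun m => distX m k) Uk -> distX 0 j = 0 ->
  (forall m, distX (S m) j = distX m k * c + distX m j * (1/2)) -> Uj = 2 * c * Uk.
Proof. intros Hj Hk H0 Hs.
  assert (E : forall M, SM (S M) j = c * SM M k + / 2 * SM M j).
  { intros M. unfold SM. rewrite decomp_S, H0.
    rewrite (sum_eq _ (fun m => distX m k * c + distX m j * (1/2))) by (intros; apply Hs).
    rewrite plus_sum, <- !scal_sum. field. }
  assert (A1 : Un_cv (fun M => SM (S M) j) Uj).
  { intros eps He. destruct (Hj eps He) as [N HN]. exists N. intros n Hn. apply HN. lia. }
  assert (A2 : Un_cv (fun M => SM (S M) j) (c * Uk + / 2 * Uj)).
  { eapply (Un_cv_ext (fun M => c * SM M k + / 2 * SM M j)). 
    intros; symmetry; apply E.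
    apply CV_plus; apply CV_mult; try apply cv_const; assumption. }
  pose proof (UL_sequence _ _ _ A1 A2). lra. Qed.

Fixpoint Ssum (a : R) (d : nat) : R := match d with O => 0 | S d' => Ssum a d' + / (a - INR d') end.
Fixpoint Hs (a : nat) : R := match a with O => 0 | S a' => Hs a' + / INR (S a') end.

Lemma Hs_S a : Hs (S a) = Hs a + / INR (S a).
Proof. reflexivity. Qed.

Lemma Ssum_Hs d a : (d <= a)%nat -> Ssum (INR a) d = Hs a - Hs (a - d).
Proof. induction d; intros H.
  - simpl. rewrite Nat.sub_0_r. ring.
  - simpl Ssum. rewrite IHd by lia.
    replace (a - d)%nat with (S (a - S d)) by lia. rewrite Hs_S.
    replace (S (a - S d)) with (a - d)%nat by lia. rewrite minus_INR by lia. lra. Qed.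

Lemma Hs_add a b : (1 <= a)%nat -> INR b / INR (a + b) <= Hs (a + b) - Hs a.
Proof. intros Ha. induction b.
  - rewrite Nat.add_0_r. simpl. unfold Rdiv. lra.
  - replace (a + S b)%nat with (S (a + b)) by lia. rewrite Hs_S.
    assert (HA : 1 <= INR (a + b)) by (replace 1 with (INR 1) by reflexivity; apply le_INR; lia).
    rewrite S_INR in *. rewrite S_INR.
    set (A := INR (a + b)) in *. pose proof (pos_INR b).
    assert (INR b / (A + 1) <= INR b / A).
    { unfold Rdiv. apply Rmult_le_compat_l. lra. apply Rinv_le_contravar; lra. }
    replace ((INR b + 1) / (A + 1)) with (INR b / (A + 1) + / (A + 1)) by (field; lra).
    lra. Qed.

Lemma Hs_pow n : 1 + INR n / 2 <= Hs (2 ^ n).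
Proof. induction n.
  - simpl. lra.
  - assert (H1 : (1 <= 2 ^ n)%nat) by (pose proof (Nat.pow_le_mono_r 2 0 n); simpl in H; lia).
    pose proof (Hs_add (2 ^ n) (2 ^ n) H1).
    replace (2 ^ S n)%nat with (2 ^ n + 2 ^ n)%nat by (rewrite Nat.pow_succ_r'; lia).
    rewrite plus_INR in H.
    replace (INR (2 ^ n) / (INR (2 ^ n) + INR (2 ^ n))) with (1/2) in H.
    rewrite S_INR. lra.
    assert (1 <= INR (2 ^ n)) by (replace 1 with (INR 1) by reflexivity; apply le_INR; lia).
    field. lra. Qed.

Lemma Ssum_nonneg a d : (d <= a)%nat -> 0 <= Ssum (INR a) d.
Proof. induction d; intros H; simpl. lra.
  assert (INR d < INR a) by (apply lt_INR; lia).
  pose proof (Rinv_0_lt_compat (INR a - INR d) ltac:(lra)). specialize (IHd ltac:(lia)). lra. Qed.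

Lemma part4 : forall U : nat -> R, renewal_measure_is U -> ~ Un_cv U 2.
Proof. intros U HU Hcv. destruct (Hcv 1 ltac:(lra)) as [N HN].
  assert (Hr : forall j, (j >= N)%nat -> 1 < U j < 3).
  { intros j Hj. specialize (HN j Hj). unfold Rdist in HN. apply Rabs_def2 in HN. lra. }
  set (n := Nat.max N 32).
  assert (Hpow : (n < 2 ^ n)%nat) by (apply Nat.pow_gt_lin_r; lia).
  set (c := 2 / LL n).
  pose proof (LL_ge2 n) as HL.
  assert (Hc : 0 < c) by (unfold c; apply Rdiv_lt_0_compat; lra).
  assert (Claim : forall d, (d < 2 ^ n)%nat ->
     Rabs (U (2 ^ n + d)%nat) * (1 + c * Ssum (INR (2 ^ n)) d) <= 3).
  { induction d; intros Hd.
    - simpl Ssum. specialize (Hr (2 ^ n + 0)%nat ltac:(lia)).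
      rewrite Rabs_right by lra. lra.
    - specialize (IHd ltac:(lia)).
      assert (Hstep : forall m, distX (S m) (2 ^ n + S d) =
          distX m (2 ^ n + d) * p (2 ^ n + d) (2 ^ n + S d) + distX m (2 ^ n + S d) * (1/2)).
      { intros m. set (k' := (2 ^ n + d - 1)%nat).
        assert (E1 : (2 ^ n + S d = S (S k'))%nat) by (unfold k'; lia).
        assert (E2 : (2 ^ n + d = S k')%nat) by (unfold k'; lia).
        rewrite E1, E2.
        apply distX_step_gen. intros i Hi. rewrite <- E1.
        apply p_zero_before; lia. }
      assert (H0 : distX 0 (2 ^ n + S d) = 0).
      { simpl. destruct (Nat.eq_dec (2 ^ n + S d) 0); [lia|reflexivity]. }
      pose proof (U_rec _ _ _ _ _ (HU (2 ^ n + S d)%nat) (HU (2 ^ n + d)%nat) H0 Hstep) as Erec.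
      replace (2 ^ n + S d)%nat with (S (2 ^ n + d)) in Erec by lia.
      rewrite p_succ, qjump_eq, blk_eq in Erec by lia.
      replace (INR (2 ^ S n) - INR (2 ^ n + d)) with (INR (2 ^ n) - INR d) in Erec
        by (rewrite Nat.pow_succ_r', mult_INR, plus_INR; simpl; ring).
      replace (2 ^ n + S d)%nat with (S (2 ^ n + d)) by lia. rewrite Erec.
      simpl Ssum.
      set (a := INR (2 ^ n) - INR d) in *.
      assert (Ha : 2 <= a).
      { unfold a. assert (H2 : (d + 2 <= 2 ^ n)%nat) by lia. apply le_INR in H2.
        rewrite plus_INR in H2. replace (INR 2) with 2 in H2 by (simpl; lra). lra. }
      set (x := c * / a).
      assert (Ex : 2 * (1 / 2 - / (a * LL n)) = 1 - x).
      { unfold x, c. field. lra. }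
      rewrite Ex.
      assert (Hx : 0 <= x <= 1/2).
      { unfold x, c. split. apply Rmult_le_pos. left; apply Rdiv_lt_0_compat; lra. left; apply Rinv_0_lt_compat; lra.
        replace (2 / LL n * / a) with (/ (LL n * a / 2)) by (field; lra).
        replace (1/2) with (/ 2) by field. apply Rinv_le_contravar. lra. nra. }
      rewrite Rabs_mult, (Rabs_right (1 - x)) by lra.
      pose proof (Ssum_nonneg (2 ^ n) d ltac:(lia)) as Hs0.
      set (s := Ssum (INR (2 ^ n)) d) in *.
      pose proof (Rabs_pos (U (2 ^ n + d)%nat)).
      replace (1 + c * (s + / a)) with (1 + c * s + x) by (unfold x; ring).
      assert (0 <= c * s) by nra.
      set (u := Rabs (U (2 ^ n + d)%nat)) in *.
      replace ((1 - x) * u * (1 + c * s + x)) with (u * (1 + c * s) - u * x * (c * s + x)) by ring.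
      assert (0 <= u * x * (c * s + x)) by (apply Rmult_le_pos; [apply Rmult_le_pos|]; lra).
      lra. }
  specialize (Claim (2 ^ n - 1)%nat ltac:(lia)).
  rewrite Ssum_Hs in Claim by lia.
  replace (2 ^ n - (2 ^ n - 1))%nat with 1%nat in Claim by lia.
  assert (Hs1 : Hs 1 = 1) by (simpl; field). rewrite Hs1 in Claim. pose proof (Hs_pow n).
  specialize (Hr (2 ^ n + (2 ^ n - 1))%nat ltac:(lia)).
  rewrite Rabs_right in Claim by lra.
  assert (Hn32 : (32 <= n)%nat) by lia.
  assert (HnR : 32 <= INR n) by (replace 32 with (INR 32) by (simpl; lra); apply le_INR; lia).
  pose proof (LL_sq n ltac:(lia)) as Hsq.
  assert (Hcs : INR n / LL n <= c * (Hs (2 ^ n) - 1)).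
  { unfold c.
    replace (INR n / LL n) with (2 / LL n * (INR n / 2)) by (field; lra).
    apply Rmult_le_compat_l. left; apply Rdiv_lt_0_compat; lra. lra. }
  assert (Hq : INR n / LL n < 2).
  { set (T := c * (Hs (2 ^ n) - 1)) in *. set (u := U (2 ^ n + (2 ^ n - 1))%nat) in *.
    assert (0 <= INR n / LL n) by (unfold Rdiv; apply Rmult_le_pos; [lra | left; apply Rinv_0_lt_compat; lra]).
    nra. }
  assert (INR n < 2 * LL n).
  { apply (Rmult_lt_compat_r (LL n)) in Hq; [|lra].
    replace (INR n / LL n * LL n) with (INR n) in Hq by (field; lra). lra. }
  nra. Qed.

Theorem mainTheorem6 :
  jumps_unif_integrable /\
  jumps_weak_cv_bernoulli /\
  (forall k, exists u, infinite_sum (fun m => distX m k) u) /\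
  (forall U : nat -> R, renewal_measure_is U -> ~ Un_cv U 2).
Proof.
  split; [exact part1|]. split; [exact part2|]. split; [exact part3|exact part4].
Qed.
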